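(* Let $L\subseteq B_i$ be an SINR-feasible set of links in a bucket $B_i$, let $e\in B_i$, and let $L^\ell=\{e'\in L: d_{e'}\le d_{e'e}\}$. Then there exists a set $G$ of at most six receivers of links in $L^\ell$ such that for every $e'\in L^\ell$ there is $g\in G$ with $d_{e'g}\le 2d_{e'e}$.
   Context: Nodes lie in the Euclidean plane. A link is $e=(s_e,r_e,P_e)$ with transmitter $s_e$, receiver $r_e$ and power $P_e>0$; $\mathcal{L}$ is the set of links. $d_e=d(s_e,r_e)$, $d_{e'e}=d(s_{e'},r_e)$, and for a point $g$, $d_{e'g}=d(s_{e'},g)$. With constants $\alpha\ge0,N>0,\beta>0$: $S_e=P_e/d_e^\alpha$, $S_{e'e}=P_{e'}/d_{e'e}^\alpha$; $L$ is SINR-feasible if $S_e/(N+\sum_{e'\in L\setminus\{e\}}S_{e'e})\ge\beta$ for all $e\in L$. Buckets: $S_{\min}=\min_{e\in\mathcal{L}}S_e$, $B_i=\{e\in\mathcal{L}:2^iS_{\min}\le S_e<2^{i+1}S_{\min}\}$. *)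

(* Defs.v *)
From HB Require Import structures.
From mathcomp Require Import all_boot all_order all_algebra.
From mathcomp Require Import reals exp.
Set Implicit Arguments. Unset Strict Implicit. Unset Printing Implicit Defensive.
Import Order.TTheory GRing.Theory Num.Theory.
Local Open Scope ring_scope.

Section SINR.
Variable R : realType.

Definition dist (p q : R * R) : R :=
  Num.sqrt ((p.1 - q.1) ^+ 2 + (p.2 - q.2) ^+ 2).

(* The link set \mathcal{L} is indexed by a finite type I:
   link e has transmitter s e, receiver r e and power P e. *)
Variables (I : finType) (s r : I -> R * R) (P : I -> R) (alpha N beta : R).

Definition d_len (e : I) : R := dist (s e) (r e).
Definition d_to (e' e : I) : R := dist (s e') (r e).
Definition sig (e : I) : R := P e / powR (d_len e) alpha.
Definition sig_to (e' e : I) : R := P e' / powR (d_to e' e) alpha.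

Definition sinr_feasible (L : {set I}) : Prop :=
  forall e, e \in L ->
    sig e / (N + \sum_(e' in L :\ e) sig_to e' e) >= beta.

(* S_min = min over all links; computed as a fold seeded with the value
   of some link e0 (the result does not depend on e0). *)
Definition Smin (e0 : I) : R := \big[Num.min/sig e0]_(j : I) sig j.

Definition in_bucket (i : nat) (e : I) : Prop :=
  2 ^+ i * Smin e <= sig e /\ sig e < 2 ^+ i.+1 * Smin e.

End SINR.

(* Main.v *)
Require Import Defs.
From HB Require Import structures.
From mathcomp Require Import all_boot all_order all_algebra.
From mathcomp Require Import reals exp.
From mathcomp Require Import ring lra.
Import Order.TTheory GRing.Theory Num.Theory.
Local Open Scope ring_scope.

Lemma polyA {R : realFieldType} (p1 y1 p2 y2 : R) : 0 <= p1 -> 0 <= y1 -> 0 <= p2 -> 0 <= y2 ->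
  ((p1+y1)^+2 + 3*y1^+2)*((p2+y2)^+2 + 3*y2^+2) <= 4 * ((p1+y1)*(p2+y2) + 3*y1*y2)^+2.
Proof.
move=> a b c d.
have h1 : 0 <= (p1 * p1 + p1*y1 *+ 2) * (p2 * p2 + p2*y2 *+ 2).
  apply: mulr_ge0; rewrite addr_ge0 ?mulrn_wge0 ?mulr_ge0 //.
have h2 : 0 <= (p1+y1) * (p2+y2) * y1 * y2.
  apply: mulr_ge0 => //; apply: mulr_ge0 => //; apply: mulr_ge0; lra.
have h3 : 0 <= y1 * y1 * (y2 * y2) by rewrite !mulr_ge0.
nra.
Qed.

Lemma genP {R : realFieldType} (c D N1 N2 p1 q1 p2 q2 : R) : 0 < c ->
  0 <= p1 -> 0 <= q1 -> 0 <= p2 -> 0 <= q2 ->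
  c * D = (p1+q1)*(p2+q2) + 3*q1*q2 ->
  c * N1 = (p1+q1)^+2 + 3*q1^+2 -> c * N2 = (p2+q2)^+2 + 3*q2^+2 ->
  0 <= D /\ N1 * N2 <= 4 * D^+2.
Proof.
move=> c0 a b d f hD h1 h2; split.
  have : 0 <= c * D by rewrite hD; apply: addr_ge0; [apply: mulr_ge0|apply: mulr_ge0; [apply: mulr_ge0|]]; lra.
  by rewrite pmulr_rge0.
have := @polyA _ p1 q1 p2 q2 a b d f; rewrite -hD -h1 -h2.
have c2 : 0 < c * c by rewrite mulr_gt0.
move=> H; rewrite -(ler_pM2l c2).
have -> : c * c * (N1 * N2) = (c * N1) * (c * N2) by ring.
have -> : c * c * (4 * D ^+ 2) = 4 * (c * D) ^+ 2 by ring.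
exact: H.
Qed.

Definition base {R : realFieldType} (s : R) (k : nat) (x y : R) : bool :=
  match k with
  | 0 => (0 <= y) && (0 <= s*x - y)
  | 1 => (0 <= y - s*x) && (0 <= s*x + y)
  | _ => (0 <= -(s*x+y)) && (0 <= y)
  end.

Definition secb {R : realFieldType} (s : R) (k : nat) (x y : R) : bool :=
  if (k < 3)%N then base s k x y else base s (k - 3) (-x) (-y).

Lemma baseP {R : realFieldType} {s : R} {k x1 y1 x2 y2} : s * s = 3 -> 0 <= s ->
  base s k x1 y1 -> base s k x2 y2 ->
  0 <= x1*x2+y1*y2 /\ (x1^+2+y1^+2)*(x2^+2+y2^+2) <= 4 * (x1*x2+y1*y2)^+2.
Proof.
move=> hs s0; case: k => [|[|k]] /= /andP[a1 b1] /andP[a2 b2].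
- apply: (@genP _ 3 _ _ _ (s*x1 - y1) y1 (s*x2-y2) y2) => //; ring: hs.
- apply: (@genP _ 12 _ _ _ (2*s*x1 + 2*y1) (y1 - s*x1) (2*s*x2+2*y2) (y2 - s*x2)) => //.
  + have : 0 <= s * x1 + y1 by []. lra.
  + have : 0 <= s * x2 + y2 by []. lra.
  + ring: hs.
  + ring: hs.
  + ring: hs.
- apply: (@genP _ 48 _ _ _ (8*y1) (-2*(s*x1 + y1)) (8*y2) (-2*(s*x2+y2))) => //.
  + lra.
  + lra.
  + lra.
  + lra.
  + ring: hs.
  + ring: hs.
  + ring: hs.
Qed.

Lemma secP {R : realFieldType} {s : R} {k x1 y1 x2 y2} : s * s = 3 -> 0 <= s ->
  secb s k x1 y1 -> secb s k x2 y2 ->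
  0 <= x1*x2+y1*y2 /\ (x1^+2+y1^+2)*(x2^+2+y2^+2) <= 4 * (x1*x2+y1*y2)^+2.
Proof.
move=> hs s0; rewrite /secb; case: ifP => _; first exact: baseP.
move=> h1 h2; have := baseP hs s0 h1 h2.
have -> : - x1 * - x2 + - y1 * - y2 = x1*x2+y1*y2 by ring.
by rewrite !sqrrN.
Qed.

Lemma cone {R : realFieldType} {s : R} {k ux uy vx vy} : s * s = 3 -> 0 <= s ->
  secb s k ux uy -> secb s k vx vy -> ux^+2 + uy^+2 <= vx^+2 + vy^+2 ->
  (ux - vx)^+2 + (uy - vy)^+2 <= vx^+2 + vy^+2.
Proof.
move=> hs s0 h1 h2 hle.
have [hd hp] := secP hs s0 h1 h2.
set D := ux*vx + uy*vy in hd hp.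
set U := ux^+2 + uy^+2 in hle hp *; set V := vx^+2 + vy^+2 in hle hp *.
have U0 : 0 <= U by rewrite /U addr_ge0 ?sqr_ge0.
have hUU : U * U <= U * V by rewrite ler_wpM2l.
have hU2 : U <= 2 * D by nra.
have -> : (ux - vx)^+2 + (uy - vy)^+2 = U - 2 * D + V by rewrite /U /V /D; ring.
lra.
Qed.

Lemma cover {R : realFieldType} (s : R) x y : 0 <= s ->
  exists k : 'I_6, secb s k x y.
Proof.
move=> s0.
have H : exists k, (k < 6)%N && secb s k x y.
  rewrite /secb /base.
  case: (lerP 0 y) => hy.
  - case: (lerP 0 (s*x - y)) => h1; first by exists 0%N => /=; rewrite ?andbT ?andTb //; try (apply/andP; split); lra.
    case: (lerP 0 (s*x + y)) => h2; first by exists 1%N => /=; rewrite ?andbT ?andTb //; try (apply/andP; split); lra.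
    by exists 2%N => /=; rewrite ?andbT ?andTb //; try (apply/andP; split); lra.
  - case: (lerP 0 (s*(-x) - (-y))) => h1; first by exists 3%N => /=; rewrite ?andbT ?andTb //; try (apply/andP; split); lra.
    case: (lerP 0 (s*(-x) + (-y))) => h2; first by exists 4%N => /=; rewrite ?andbT ?andTb //; try (apply/andP; split); lra.
    by exists 5%N => /=; rewrite ?andbT ?andTb //; try (apply/andP; split); lra.
case: H => k /andP[k6 hk]; by exists (Ordinal k6).
Qed.

Lemma tri {R : realType} (a b c : R * R) : dist a c <= dist a b + dist b c.
Proof.
rewrite /dist.
set p1 := a.1 - b.1; set p2 := a.2 - b.2; set q1 := b.1 - c.1; set q2 := b.2 - c.2.
have -> : a.1 - c.1 = p1 + q1 by rewrite /p1 /q1; ring.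
have -> : a.2 - c.2 = p2 + q2 by rewrite /p2 /q2; ring.
set B := p1^+2 + p2^+2; set C := q1^+2 + q2^+2.
have B0 : 0 <= B by rewrite addr_ge0 ?sqr_ge0.
have C0 : 0 <= C by rewrite addr_ge0 ?sqr_ge0.
have t0 : 0 <= Num.sqrt B + Num.sqrt C by rewrite addr_ge0 ?sqrtr_ge0.
rewrite -(ger0_norm t0) -sqrtr_sqr ler_sqrt ?sqr_ge0 //.
rewrite [X in _ <= X]sqrrD !sqr_sqrtr // -sqrtrM //.
have cs : p1*q1 + p2*q2 <= Num.sqrt (B * C).
  case: (lerP (p1*q1 + p2*q2) 0) => h.
    by apply: le_trans h _; rewrite sqrtr_ge0.
  rewrite -(ger0_norm (ltW h)) -sqrtr_sqr ler_sqrt ?mulr_ge0 //.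
  have : 0 <= (p1*q2 - p2*q1)^+2 by rewrite sqr_ge0.
  rewrite /B /C; nra.
have -> : (p1 + q1) ^+ 2 + (p2 + q2) ^+ 2 = B + C + 2 * (p1*q1 + p2*q2) by rewrite /B /C; ring.
rewrite mulr2n; lra.
Qed.

Lemma exmin {R : realFieldType} (I : finType) (S : {set I}) (F : I -> R) (g0 : I) :
  g0 \in S -> exists2 g, g \in S & forall h, h \in S -> F g <= F h.
Proof.
move=> hg0; case: (arg_minP F hg0) => g hg hmin; exists g => //.
Qed.

Theorem lemma2 (R : realType) (I : finType) (s r : I -> R * R) (P : I -> R)
    (alpha N beta : R) (halpha : 0 <= alpha) (hN : 0 < N) (hbeta : 0 < beta)
    (hP : forall e, 0 < P e) (i : nat) (L : {set I})
    (hLB : forall e', e' \in L -> in_bucket s r P alpha i e')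
    (hfeas : sinr_feasible s r P alpha N beta L)
    (e : I) (he : in_bucket s r P alpha i e) :
  let Ll := [set e' in L | d_len s r e' <= d_to s r e' e] in
  exists G : {set I},
    [/\ G \subset Ll, (#|G| <= 6)%N
      & forall e', e' \in Ll ->
          exists2 g, g \in G & dist (s e') (r g) <= 2 * d_to s r e' e].
Proof.
move=> Ll.
set sq : R := Num.sqrt 3.
have hs : sq * sq = 3 by rewrite -expr2 sqr_sqrtr.
have s0 : 0 <= sq by rewrite sqrtr_ge0.
pose ux (x : I) := (s x).1 - (r e).1.
pose uy (x : I) := (s x).2 - (r e).2.
pose Sk (k : 'I_6) := [set x in Ll | secb sq k (ux x) (uy x)].
pose pk (k : 'I_6) := [pick g in Sk k | [forall h in Sk k, d_to s r g e <= d_to s r h e]].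
exists [set x in pmap id [seq pk k | k <- enum 'I_6]]; split.
- apply/subsetP => x; rewrite inE mem_pmap map_id => /mapP[k _].
  rewrite /pk; case: pickP => [g /andP[hg _] [->]|_] //.
  by move: hg; rewrite inE => /andP[].
- rewrite cardsE (leq_trans (card_size _)) // size_pmap.
  by rewrite (leq_trans (count_size _ _)) // size_map size_enum_ord.
move=> e' he'.
have [k hk] := @cover _ sq (ux e') (uy e') s0.
have e'S : e' \in Sk k by rewrite inE he' hk.
case E: (pk k) => [g|]; last first.
  move: E; rewrite /pk; case: pickP => // hnone _.
  have [g0 hg0 hmin] := @exmin _ _ _ (fun x => d_to s r x e) _ e'S.
  have := hnone g0; rewrite /= hg0 /=.
  move=> /negbT/negP H; exfalso; apply: H; apply/forall_inP => h hh; exact: hmin.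
have := E; rewrite /pk; case: pickP => // g' /andP[hg /forall_inP hmin] [eg].
subst g'.
exists g.
  rewrite inE mem_pmap map_id; apply/mapP; exists k; first by rewrite mem_enum.
  exact: (esym E).
have hmin' := hmin e' e'S.
move: hg; rewrite inE => /andP[gL gk].
move: (gL); rewrite inE => /andP[_ gle].
apply: le_trans (tri _ (s g) _) _.
rewrite mulr2n mulrDl mul1r lerD //; last first.
  apply: le_trans gle hmin'.
rewrite /d_to /dist ler_sqrt ?addr_ge0 ?sqr_ge0 //.
have := @cone _ sq k (ux g) (uy g) (ux e') (uy e') hs s0 gk hk.
have -> : (s e').1 - (s g).1 = -(ux g - ux e') by rewrite /ux /uy; ring.
have -> : (s e').2 - (s g).2 = -(uy g - uy e') by rewrite /ux /uy; ring.
rewrite !sqrrN; apply.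
by move: hmin'; rewrite /d_to /dist ler_sqrt ?addr_ge0 ?sqr_ge0.
Qed.
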